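(* Consider an $[[n,k]]$ stabilizer code with Clifford encoder $U_E$, stabilizer group $\mathcal S$, set of syndrome representatives $T=\{E_s\}$ and correction operators $C_s=E_s$, and let $\{\sqrt{p_i}E_i\}$ be the Kraus operators of the $n$-qubit depolarizing channel. Let $s_i$ be the error syndrome of $E_i$ and \[ W_{l,i,s}=(I^{\otimes k}\otimes\langle l|)\,U_E^\dagger C_sP_s\sqrt{p_i}E_iU_E\,(I^{\otimes k}\otimes|0\rangle^{\otimes n-k}). \] Then \[ \frac{1}{2^{2k}}\sum_l\left|\mathrm{tr}(W_{l,i,s_i})\right|^2=\begin{cases}p_i,& E_i\in T\times\mathcal S,\\ 0,&\text{otherwise},\end{cases} \] where $T\times\mathcal S=\{hg: h\in T,\ g\in\mathcal S\}$ (operators compared up to phase).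
   Context: Pauli errors are tensor products of $I,X,Y,Z$ (phases ignored). $U_E$ is an $n$-qubit Clifford unitary; the code space is $\{U_E(|\psi\rangle\otimes|0\rangle^{\otimes n-k})\}$, stabilized by the abelian group $\mathcal S$ generated by $g_j=U_EZ_{j+k}U_E^\dagger$, $j=1,\dots,n-k$. The error syndrome of a Pauli $E$ is $s\in\{0,1\}^{n-k}$ with $s_j=0$ iff $E$ commutes with $g_j$. Syndrome projectors: $P_s=\prod_{j=1}^{n-k}\frac{I+(-1)^{s_j}g_j}{2}$. A set of syndrome representatives $T$ consists of one Pauli operator $E_s$ with syndrome $s$ for each $s\in\{0,1\}^{n-k}$, with $E_0=I$; the correction for outcome $s$ is $C_s=E_s$. The index $l$ runs over the computational basis of the $n-k$ ancilla qubits. The $n$-qubit depolarizing channel with rate $p$ has Kraus operators $\sqrt{p_i}E_i$, $E_i$ ranging over the $4^n$ Pauli operators, with $p_i=(1-\frac34p)^{n-w}(\frac p4)^w$ where $w$ is the weight (number of non-identity factors) of $E_i$. *)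

(* Defs.v *)
From mathcomp Require Import all_boot all_order all_algebra all_field.
Import Order.TTheory GRing.Theory Num.Theory.
Local Open Scope ring_scope.

(* Qubit ordering: an index i : 'I_(2^n) of the computational basis encodes
   the bit string b_0 ... b_(n-1) with qubit 0 the most significant bit. *)
Definition qbit (n : nat) (q : 'I_n) (i : nat) : bool :=
  odd (i %/ 2 ^ (n.-1 - q))%N.

(* Single-qubit Paulis, coded 0 = I, 1 = X, 2 = Y, 3 = Z; entry (x,y). *)
Definition sigma (a : 'I_4) (x y : bool) : algC :=
  match val a with
  | 0 => (x == y)%:R
  | 1 => (x != y)%:R
  | 2 => if x == y then 0 else (if x then 'i else - 'i)
  | _ => if x == y then (if x then -1 else 1) else 0
  end.

(* Pauli strings on n qubits (phases ignored). *)
Definition pauli_string (n : nat) := {ffun 'I_n -> 'I_4}.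

Definition pauli_op (n : nat) (a : pauli_string n) : 'M[algC]_(2 ^ n) :=
  \matrix_(i, j) \prod_(q < n) sigma (a q) (qbit n q i) (qbit n q j).

Definition weight (n : nat) (a : pauli_string n) : nat :=
  #|[set q | a q != ord0]|.

Definition adj (m p : nat) (A : 'M[algC]_(m, p)) : 'M[algC]_(p, m) :=
  (map_mx Num.conj A)^T.

Definition unitary (N : nat) (U : 'M[algC]_N) : Prop :=
  U *m adj N N U = 1%:M /\ adj N N U *m U = 1%:M.

Definition clifford (n : nat) (U : 'M[algC]_(2 ^ n)) : Prop :=
  unitary (2 ^ n) U /\
  forall a : pauli_string n, exists (b : pauli_string n) (c : algC),
      U *m pauli_op n a *m adj _ _ U = c *: pauli_op n b.

Definition Zstring (n q : nat) : pauli_string n :=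
  [ffun q' : 'I_n => if val q' == q then (inord 3 : 'I_4) else ord0].

(* generators g_j = U Z_(k+j) U^dagger, j < n - k (0-indexed; paper's
   Z_(j+k) with 1-indexed j and qubits). *)
Definition gen_g (n k : nat) (U : 'M[algC]_(2 ^ n)) (j : 'I_(n - k))
  : 'M[algC]_(2 ^ n) :=
  U *m pauli_op n (Zstring n (k + j)) *m adj _ _ U.

Inductive in_stab (n k : nat) (U : 'M[algC]_(2 ^ n)) : 'M[algC]_(2 ^ n) -> Prop :=
  | stab_one : @in_stab n k U 1%:M
  | stab_gen j : @in_stab n k U (gen_g n k U j)
  | stab_mul A B : @in_stab n k U A -> @in_stab n k U B -> @in_stab n k U (A *m B).

Definition syndrome_t (n k : nat) := {ffun 'I_(n - k) -> bool}.

Definition syndrome (n k : nat) (U : 'M[algC]_(2 ^ n)) (E : 'M[algC]_(2 ^ n))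
  : syndrome_t n k :=
  [ffun j => ~~ (E *m gen_g n k U j == gen_g n k U j *m E)].

Definition syndrome_proj (n k : nat) (U : 'M[algC]_(2 ^ n)) (s : syndrome_t n k)
  : 'M[algC]_(2 ^ n) :=
  \big[mulmx/1%:M]_(j < n - k)
     (2%:R^-1 *: (1%:M + ((-1) ^+ s j) *: gen_g n k U j)).

Definition identity_string (n : nat) : pauli_string n := [ffun _ => ord0].

Definition syndrome_reps (n k : nat) (U : 'M[algC]_(2 ^ n))
  (Es : syndrome_t n k -> pauli_string n) : Prop :=
  (forall s, syndrome n k U (pauli_op n (Es s)) = s) /\
  Es [ffun _ => false] = identity_string n.

Definition depol_prob (n : nat) (p : algC) (a : pauli_string n) : algC :=
  (1 - 3%:R / 4%:R * p) ^+ (n - weight n a) * (p / 4%:R) ^+ weight n a.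

(* (I^{(x)k} (x) <l|) : 2^k x 2^n, data qubits most significant *)
Definition braL (n k : nat) (l : nat) : 'M[algC]_(2 ^ k, 2 ^ n) :=
  \matrix_(a, i) ((i : nat) == (a * 2 ^ (n - k) + l)%N)%:R.

(* (I^{(x)k} (x) |0>^{(x) n-k}) : 2^n x 2^k *)
Definition ket0 (n k : nat) : 'M[algC]_(2 ^ n, 2 ^ k) :=
  \matrix_(i, a) ((i : nat) == (a * 2 ^ (n - k))%N)%:R.

Definition Wop (n k : nat) (U : 'M[algC]_(2 ^ n))
  (Es : syndrome_t n k -> pauli_string n) (p : algC)
  (l : nat) (a : pauli_string n) (s : syndrome_t n k) : 'M[algC]_(2 ^ k) :=
  braL n k l *m adj _ _ U *m pauli_op n (Es s) *m syndrome_proj n k U s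
    *m (sqrtC (depol_prob n p a) *: pauli_op n a) *m U *m ket0 n k.

Definition in_TxS (n k : nat) (U : 'M[algC]_(2 ^ n))
  (Es : syndrome_t n k -> pauli_string n) (E : 'M[algC]_(2 ^ n)) : Prop :=
  exists (s : syndrome_t n k) (g : 'M[algC]_(2 ^ n)) (c : algC),
    @in_stab n k U g /\ E = c *: (pauli_op n (Es s) *m g).

(* Main.v *)
Require Import Defs.
From mathcomp Require Import all_boot all_order all_algebra all_field.
From mathcomp Require Import zify ring lra.
Import Order.TTheory GRing.Theory Num.Theory.
Local Open Scope ring_scope.

Definition qb (n q i : nat) : bool := odd (i %/ 2 ^ (n.-1 - q)).

Lemma qb_split k m q a l : (l < 2 ^ m)%N -> (q < k + m)%N ->
  qb (k + m) q (a * 2 ^ m + l) = if (q < k)%N then qb k q a else qb m (q - k) l.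
Proof.
move=> lm qkm; rewrite /qb; case: ifP => qk.
  have -> : ((k + m).-1 - q = m + (k.-1 - q))%N.
    by case: k qk qkm => // k' qk qkm /=; lia.
  rewrite expnD divnMA divnMDl ?expn_gt0 //. rewrite (divn_small lm) addn0. by [].
have -> : ((k + m).-1 - q = m.-1 - (q - k))%N by lia.
have -> : (2 ^ m = 2 ^ (q - k).+1 * 2 ^ (m.-1 - (q - k)))%N.
  by rewrite -expnD; congr (2 ^ _)%N; lia.
rewrite mulnA divnMDl ?expn_gt0 // oddD oddM oddX /=.
by rewrite andbF.
Qed.

Lemma sum_split (A M : nat) (F : nat -> algC) :
  \sum_(0 <= i < A * M) F i = \sum_(0 <= a < A) \sum_(0 <= l < M) F (a * M + l)%N.
Proof.
elim: A => [|A IH]; first by rewrite mul0n !big_geq.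
rewrite big_nat_recr //= -IH mulSn addnC (big_cat_nat _ (leq_addr _ _)) //=.
congr (_ + _).
rewrite -{1}(add0n (A * M)%N) big_addn addKn.
by apply: eq_bigr => i _; rewrite addnC.
Qed.

Lemma sum_prod_bits (k : nat) (F : nat -> bool -> algC) :
  \sum_(0 <= i < 2 ^ k) \prod_(0 <= q < k) F q (qb k q i) =
  \prod_(0 <= q < k) (F q false + F q true).
Proof.
elim: k F => [|k IH] F.
  by rewrite expn0 big_nat1 !big_geq.
rewrite expnS sum_split.
have E : forall b l, (b < 2)%N -> (l < 2 ^ k)%N ->
   \prod_(0 <= q < k.+1) F q (qb k.+1 q (b * 2 ^ k + l)) =
   F 0%N (odd b) * \prod_(0 <= q < k) F q.+1 (qb k q l).
  move=> b l b2 lk; rewrite big_nat_recl //; congr (_ * _).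
    have := qb_split 1 k 0 b l lk isT; rewrite add1n => ->.
    by case: b b2 => [|[|]].
  apply: congr_big_nat => // q /andP[_ qk].
  have := qb_split 1 k q.+1 b l lk; rewrite add1n ltnS => -> //.
  by rewrite subn1.
rewrite (big_nat_recl _ _ _ (leq0n _)) -(IH (fun q => F q.+1)) mulrDl.
rewrite big_nat_recr //= big_nat1.
rewrite (eq_big_nat _ _ (fun l lk => E 0%N l isT (proj2 (andP lk)))).
rewrite (eq_big_nat _ _ (fun l lk => E 1%N l isT (proj2 (andP lk)))).
by rewrite -!mulr_sumr.
Qed.

Lemma qb_inj k i j : (i < 2 ^ k)%N -> (j < 2 ^ k)%N ->
  (forall q, (q < k)%N -> qb k q i = qb k q j) -> i = j.
Proof.
elim: k i j => [|k IH] i j.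
  by rewrite expn0 !ltnS !leqn0 => /eqP-> /eqP->.
move=> ik jk H.
rewrite (divn_eq i (2 ^ k)) (divn_eq j (2 ^ k)).
have lti : (i %% 2 ^ k < 2 ^ k)%N by rewrite ltn_mod expn_gt0.
have ltj : (j %% 2 ^ k < 2 ^ k)%N by rewrite ltn_mod expn_gt0.
have di : (i %/ 2 ^ k < 2)%N by rewrite ltn_divLR ?expn_gt0 // -expnS.
have dj : (j %/ 2 ^ k < 2)%N by rewrite ltn_divLR ?expn_gt0 // -expnS.
have Hq := fun q (h : (q < 1 + k)%N) =>
   H q h.
rewrite (divn_eq i (2 ^ k)) (divn_eq j (2 ^ k)) in Hq.
rewrite -[k.+1]add1n in Hq.
have h0 := Hq 0%N isT; rewrite !qb_split // in h0.
have -> : (i %/ 2 ^ k = j %/ 2 ^ k)%N.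
  move: h0; rewrite /qb /= !divn1.
  by case: (i %/ 2 ^ k)%N di => [|[|]] // _; case: (j %/ 2 ^ k)%N dj => [|[|]].
congr (_ + _)%N; apply: IH => // q qk.
have := Hq q.+1; rewrite !qb_split // ?add1n ?ltnS //= subn1 /=.
by apply.
Qed.

Definition Tm n (f : nat -> bool -> bool -> algC) : 'M[algC]_(2 ^ n) :=
  \matrix_(i, j) \prod_(0 <= q < n) f q (qb n q i) (qb n q j).
Lemma Tm_mul n f g : Tm n f *m Tm n g =
  Tm n (fun q x y => f q x false * g q false y + f q x true * g q true y).
Proof.
apply/matrixP => i j; rewrite /Tm !mxE.
rewrite -(sum_prod_bits n (fun q z => f q (qb n q i) z * g q z (qb n q j))) big_mkord.
by apply: eq_bigr => l _; rewrite !mxE -big_split.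
Qed.

Lemma Tm_tr n f : \tr (Tm n f) = \prod_(0 <= q < n) (f q false false + f q true true).
Proof.
rewrite /mxtrace -(sum_prod_bits n (fun q z => f q z z)) big_mkord.
by apply: eq_bigr => l _; rewrite !mxE.
Qed.

Lemma Tm_scale n (c : nat -> algC) f :
  Tm n (fun q x y => c q * f q x y) = (\prod_(0 <= q < n) c q) *: Tm n f.
Proof. by apply/matrixP => i j; rewrite /Tm !mxE big_split. Qed.

Lemma Tm_adj n f : adj _ _ (Tm n f) = Tm n (fun q x y => (f q y x)^*).
Proof. by apply/matrixP => i j; rewrite /Tm /adj !mxE rmorph_prod. Qed.

Lemma Tm_ext n f g : (forall q x y, (q < n)%N -> f q x y = g q x y) -> Tm n f = Tm n g.
Proof.
move=> H; apply/matrixP => i j; rewrite /Tm !mxE.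
by apply: congr_big_nat => // q /andP[_ qn]; apply: H.
Qed.

Lemma Tm_id n : Tm n (fun q x y => (x == y)%:R) = 1%:M.
Proof.
apply/matrixP => i j; rewrite /Tm !mxE.
case: (eqVneq i j) => [->|ij].
  by rewrite big1 // => q _; rewrite eqxx.
apply/eqP.
have [H|] := boolP (all (fun q => qb n q i == qb n q j) (index_iota 0 n)).
  case/eqP: ij; apply: val_inj; apply: (@qb_inj n); [exact: ltn_ord | exact: ltn_ord | move=> q qn].
  by apply/eqP; move/allP: H; apply; rewrite mem_index_iota.
case/allPn => q qn /negbTE Hq.
rewrite big_mkcond prodf_seq_eq0; apply/hasP; exists q => //.
by move: Hq => /= ->.
Qed.

Definition x4 (a b : nat) : nat :=
  match a, b with
  | 0, b => b | a, 0 => a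
  | 1, 1 => 0 | 1, 2 => 3 | 1, _ => 2
  | 2, 1 => 3 | 2, 2 => 0 | 2, _ => 1
  | _, 1 => 2 | _, 2 => 1 | _, _ => 0 end%N.

Lemma x4_lt (a b : 'I_4) : (x4 a b < 4)%N.
Proof. by case: a b => [[|[|[|[|?]]]] ?] [[|[|[|[|?]]]] ?]. Qed.

Definition mul4 (a b : 'I_4) : 'I_4 := Ordinal (x4_lt a b).

Definition ph (a b : nat) : algC :=
  match a, b with
  | 1%N, 2%N => 'i | 2%N, 1%N => - 'i | 2%N, 3%N => 'i | 3%N, 2%N => - 'i
  | 3%N, 1%N => 'i | 1%N, 3%N => - 'i | _, _ => 1 end.

Definition sg4 (a b : nat) : algC :=
  if [&& a != 0, b != 0 & a != b]%N then -1 else 1.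

Ltac bash4 a := case: a => [[|[|[|[|?]]]] ?] //.

Lemma iiE : 'i * 'i = -1 :> algC.
Proof. by rewrite -expr2 sqrCi. Qed.

Lemma sig_mul a b x y : sigma a x false * sigma b false y + sigma a x true * sigma b true y
  = ph a b * sigma (mul4 a b) x y.
Proof.
bash4 a; bash4 b; case: x; case: y;
rewrite /sigma /= ?mulr0 ?mul0r ?mulr1 ?mul1r ?addr0 ?add0r ?mulrN ?mulNr ?opprK ?iiE ?mulN1r ?mulrN1 ?opprK //.
all: by rewrite ?mulr1 ?mul1r.
Qed.

Lemma sig_adj a x y : (sigma a y x)^* = sigma a x y.
Proof.
bash4 a; case: x; case: y; rewrite /sigma /= ?rmorph0 ?rmorph1 ?rmorphN /= ?conjCi ?opprK ?rmorph1 //.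
Qed.

Lemma mul4C a b : mul4 a b = mul4 b a.
Proof. by apply: val_inj; bash4 a; bash4 b. Qed.

Lemma ph_comm (a b : 'I_4) : ph a b = sg4 a b * ph b a.
Proof.
bash4 a; bash4 b; rewrite /sg4 /ph /= ?mul1r ?mulN1r ?opprK //.
Qed.

Lemma sig_tr a : sigma a false false + sigma a true true = if val a == 0%N then 2 else 0.
Proof. by bash4 a; rewrite /sigma /= ?addrN ?addr0. Qed.

Lemma sig_col a : `|sigma a false false| ^+ 2 + `|sigma a true false| ^+ 2 = 1.
Proof.
bash4 a; rewrite /sigma /= ?normr0 ?normr1 ?normrN ?normCi ?normr1 ?expr0n ?expr1n ?addr0 ?add0r //.
Qed.

Lemma mul4_self a : mul4 a a = ord0.
Proof. by apply: val_inj; bash4 a. Qed.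

Lemma ph_self (a : 'I_4) : ph a a = 1.
Proof. by bash4 a. Qed.

Lemma mul4_eq0 a b : (mul4 a b == ord0) = (a == b).
Proof.
apply/eqP/eqP => [H|->]; last exact: mul4_self.
move: H => /(congr1 val); apply: contra_eq => ab.
apply/eqP; move: ab; bash4 a; bash4 b.
Qed.

Lemma sg4_pm a b : sg4 a b = 1 \/ sg4 a b = -1.
Proof. rewrite /sg4; case: ifP; by [right | left]. Qed.

Lemma mul4_0l b : mul4 ord0 b = b.
Proof. by apply: val_inj. Qed.
Lemma mul4_0r b : mul4 b ord0 = b.
Proof. by apply: val_inj; bash4 b. Qed.
Lemma ph_0l b : ph 0 b = 1.
Proof. by []. Qed.
Lemma ph_0r b : ph b 0 = 1.
Proof. by case: b => [|[|[|[|]]]]. Qed.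

Section Pauli.
Variable n : nat.
Implicit Types a b : pauli_string n.

Definition fn a (q : nat) : 'I_4 := if @insub _ (fun x => x < n)%N 'I_n q is Some q' then a q' else ord0.

Lemma fn_lt a q (qn : (q < n)%N) : fn a q = a (Ordinal qn).
Proof. by rewrite /fn insubT. Qed.

Lemma fnE a (q : 'I_n) : fn a q = a q.
Proof. by case: q => q qn; rewrite fn_lt. Qed.

Lemma PE a : pauli_op n a = Tm n (fun q => sigma (fn a q)).
Proof.
apply/matrixP => i j; rewrite /Tm !mxE big_mkord.
by apply: eq_bigr => q _; rewrite fnE.
Qed.

Definition mulp a b : pauli_string n := [ffun q => mul4 (a q) (b q)].
Definition phs a b : algC := \prod_(0 <= q < n) ph (fn a q) (fn b q).
Definition sgs a b : algC := \prod_(0 <= q < n) sg4 (fn a q) (fn b q).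

Lemma PP a b : pauli_op n a *m pauli_op n b = phs a b *: pauli_op n (mulp a b).
Proof.
rewrite !PE Tm_mul -Tm_scale; apply: Tm_ext => q x y qn.
by rewrite sig_mul !fn_lt ffunE.
Qed.

Lemma Padj a : adj _ _ (pauli_op n a) = pauli_op n a.
Proof. by rewrite PE Tm_adj; apply: Tm_ext => q x y _; rewrite sig_adj. Qed.

Lemma Pid : pauli_op n (identity_string n) = 1%:M.
Proof.
rewrite PE -Tm_id; apply: Tm_ext => q x y qn.
by rewrite fn_lt ffunE.
Qed.

Lemma PPself a : pauli_op n a *m pauli_op n a = 1%:M.
Proof.
rewrite PP /phs big1 ?scale1r; last by move=> q _; rewrite ph_self.
rewrite -Pid; congr pauli_op; apply/ffunP => q; rewrite !ffunE.
exact: mul4_self.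
Qed.

Lemma Pcomm a b : pauli_op n a *m pauli_op n b = sgs a b *: (pauli_op n b *m pauli_op n a).
Proof.
rewrite !PP scalerA; congr (_ *: pauli_op n _).
  by rewrite /phs /sgs -big_split; apply: eq_bigr => q _; rewrite ph_comm.
by apply/ffunP => q; rewrite !ffunE mul4C.
Qed.

Lemma sgs_pm a b : sgs a b = 1 \/ sgs a b = -1.
Proof.
rewrite /sgs; apply: (big_ind (fun x : algC => x = 1 \/ x = -1)).
- by left.
- by move=> x y [->|->] [->|->]; rewrite ?mulr1 ?mulrN1 ?opprK; auto.
- by move=> q _; apply: sg4_pm.
Qed.

Lemma Ptr0 a : a != identity_string n -> \tr (pauli_op n a) = 0.
Proof.
move=> H; rewrite PE Tm_tr; apply/eqP.
have [q aq] : exists q, a q != ord0.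
  apply/existsP; move: H; apply: contraR; rewrite negb_exists => /forallP H.
  by apply/eqP/ffunP => q; rewrite ffunE; apply/eqP; move: (H q); rewrite negbK.
rewrite big_mkcond prodf_seq_eq0; apply/hasP; exists (val q).
  by rewrite mem_index_iota ltn_ord.
rewrite /= fnE sig_tr.
by case: ifP => //; move: aq; case: (a q) => [[|m] pm].
Qed.

Lemma PPtr a b : a != b -> \tr (pauli_op n a *m pauli_op n b) = 0.
Proof.
move=> ab; rewrite PP mxtraceZ Ptr0 ?mulr0 //.
move: ab; apply: contra => /eqP H; apply/eqP/ffunP => q.
have := congr1 (fun f : pauli_string n => f q) H; rewrite !ffunE => /eqP.
by rewrite mul4_eq0 => /eqP.
Qed.

Lemma two_n_neq0 : (2 ^ n)%:R != 0 :> algC.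
Proof. by rewrite pnatr_eq0 expn_eq0. Qed.

Lemma one_neq0 : (1%:M : 'M[algC]_(2 ^ n)) != 0.
Proof.
have i0 : (0 < 2 ^ n)%N by rewrite expn_gt0.
apply/negP => /eqP/matrixP/(_ (Ordinal i0) (Ordinal i0)).
by rewrite !mxE eqxx /= => /eqP; rewrite oner_eq0.
Qed.

Lemma P_neq0 a : pauli_op n a != 0.
Proof.
apply/negP => /eqP H; move: one_neq0; rewrite -(PPself a) H mul0mx.
by rewrite eqxx.
Qed.

Lemma P_inj a b (c c' : algC) : c *: pauli_op n a = c' *: pauli_op n b -> c != 0 -> a = b.
Proof.
move=> H c0; apply/eqP; apply/negP => /negP ab.
have := congr1 (fun M => \tr (M *m pauli_op n a)) H.
rewrite -!scalemxAl !mxtraceZ PPself PPtr; last by rewrite eq_sym.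
rewrite mxtrace1 mulr0 => /eqP; rewrite mulf_eq0 (negbTE c0) /=.
by rewrite (negbTE two_n_neq0).
Qed.

End Pauli.

Lemma adj_mul m p r (A : 'M[algC]_(m, p)) (B : 'M[algC]_(p, r)) :
  adj _ _ (A *m B) = adj _ _ B *m adj _ _ A.
Proof. by rewrite /adj map_mxM trmx_mul. Qed.

Lemma adj_scale m p c (A : 'M[algC]_(m, p)) : adj _ _ (c *: A) = c^* *: adj _ _ A.
Proof. by rewrite /adj map_mxZ linearZ. Qed.

Lemma adj_one m : adj _ _ (1%:M : 'M[algC]_m) = 1%:M.
Proof. by rewrite /adj map_scalar_mx rmorph1 tr_scalar_mx. Qed.

Section Cliff.
Variables (n : nat) (U : 'M[algC]_(2 ^ n)).
Hypothesis hU : unitary _ U.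
Let Ua := adj _ _ U.

Lemma UUa : U *m Ua = 1%:M. Proof. by case: hU. Qed.
Lemma UaU : Ua *m U = 1%:M. Proof. by case: hU. Qed.

Lemma conj_back (X : 'M[algC]_(2 ^ n)) : Ua *m (U *m X *m Ua) *m U = X.
Proof. by rewrite !mulmxA UaU mul1mx -!mulmxA UaU mulmx1. Qed.

Lemma conj_fwd (X : 'M[algC]_(2 ^ n)) : U *m (Ua *m X *m U) *m Ua = X.
Proof. by rewrite !mulmxA UUa mul1mx -!mulmxA UUa mulmx1. Qed.

Lemma conj_mul (X Y : 'M[algC]_(2 ^ n)) : Ua *m (X *m Y) *m U = (Ua *m X *m U) *m (Ua *m Y *m U).
Proof. by rewrite !mulmxA -[Ua *m X *m U *m Ua]mulmxA UUa mulmx1. Qed.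

Lemma unit_phase (X : 'M[algC]_(2 ^ n)) lam d :
  X *m adj _ _ X = 1%:M -> X = lam *: pauli_op n d -> lam * lam^* = 1.
Proof.
move=> HX E; move: HX; rewrite E adj_scale Padj -scalemxAl -scalemxAr scalerA PPself.
move=> /eqP; rewrite -subr_eq0 -{2}(scale1r 1%:M) -scalerBl scalemx_eq0.
by rewrite (negbTE (one_neq0 n)) orbF subr_eq0 => /eqP.
Qed.

End Cliff.

Lemma cliff_inv n (U : 'M[algC]_(2 ^ n)) : clifford n U ->
  forall b, exists a c, adj _ _ U *m pauli_op n b *m U = c *: pauli_op n a.
Proof.
case=> hU hC.
set Ua := adj _ _ U.
pose cf a b := \tr (pauli_op n b *m (U *m pauli_op n a *m Ua)) / (2 ^ n)%:R.
have ex : forall a, exists b, U *m pauli_op n a *m Ua == cf a b *: pauli_op n b.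
  move=> a; have [b [c E]] := hC a; exists b; apply/eqP.
  rewrite /cf E -scalemxAr mxtraceZ PPself mxtrace1 mulfK ?two_n_neq0 //.
pose f a := xchoose (ex a).
have hf a : U *m pauli_op n a *m Ua = cf a (f a) *: pauli_op n (f a).
  exact/eqP/(xchooseP (ex a)).
have cf0 a : cf a (f a) != 0.
  apply/negP => /eqP c0; move: (hf a); rewrite c0 scale0r => H.
  have := @conj_back n U hU (pauli_op n a); rewrite -/Ua H mulmx0 mul0mx => H2.
  by move: (P_neq0 n a); rewrite -H2 eqxx.
have finj : injective f.
  move=> a1 a2 Hf.
  have E1 := @conj_back n U hU (pauli_op n a1); have E2 := @conj_back n U hU (pauli_op n a2).
  rewrite -/Ua hf Hf -scalemxAr -scalemxAl in E1.
  rewrite -/Ua hf -scalemxAr -scalemxAl in E2.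
  apply: (@P_inj n _ _ (cf a2 (f a2)) (cf a1 (f a2))) => //.
  by rewrite -E1 -E2 !scalerA mulrC.
have [g fg gf] := injF_bij finj.
move=> b; exists (g b), (cf (g b) (f (g b)))^-1.
have c0 := cf0 (g b).
move: c0 (hf (g b)); set c := cf (g b) (f (g b)); rewrite gf => c0 H.
have := @conj_back n U hU (pauli_op n (g b)); rewrite -/Ua H -scalemxAr -scalemxAl => H2.
by rewrite -H2 scalerA mulVf ?scale1r.
Qed.

Lemma pick_sumr N (G : 'I_N -> algC) v (vlt : (v < N)%N) :
  \sum_(i < N) G i * ((i : nat) == v)%:R = G (Ordinal vlt).
Proof.
rewrite (bigD1 (Ordinal vlt)) //= eqxx mulr1 big1 ?addr0 // => i Hi.
move: Hi; rewrite -val_eqE /= => /negbTE ->; by rewrite mulr0.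
Qed.

Lemma pick_suml N (G : 'I_N -> algC) v (vlt : (v < N)%N) :
  \sum_(i < N) ((i : nat) == v)%:R * G i = G (Ordinal vlt).
Proof. rewrite -(@pick_sumr N G v vlt); apply: eq_bigr => i _; exact: mulrC. Qed.

Lemma split_prod k m (F : nat -> 'I_4) c l : (l < 2 ^ m)%N ->
  \prod_(0 <= q < k + m) sigma (F q) (qb (k + m) q (c * 2 ^ m + l)) (qb (k + m) q (c * 2 ^ m)) =
  (\prod_(0 <= q < k) sigma (F q) (qb k q c) (qb k q c)) *
  \prod_(0 <= r < m) sigma (F (k + r)%N) (qb m r l) false.
Proof.
move=> lm.
have m0 : (0 < 2 ^ m)%N by rewrite expn_gt0.
rewrite (big_cat_nat (leq0n k) (leq_addr m k)) /=.
congr (_ * _).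
  apply: eq_big_nat => q /andP[_ qk].
  have qkm : (q < k + m)%N by apply: leq_trans qk (leq_addr _ _).
  have := qb_split k m q c 0 m0 qkm; rewrite addn0 => ->.
  by rewrite qb_split // qk.
rewrite -{1}[k]add0n big_addn addKn.
apply: eq_big_nat => r /andP[_ rm].
have rkm : (r + k < k + m)%N by rewrite addnC ltn_add2l.
have := qb_split k m (r + k) c 0 m0 rkm; rewrite addn0 => ->.
rewrite qb_split // ltnNge leq_addl /= addnK addnC.
by rewrite /qb div0n.
Qed.

Lemma prod_eqb n (i j : 'I_(2 ^ n)) :
  \prod_(0 <= q < n) (qb n q i == qb n q j)%:R = (i == j)%:R :> algC.
Proof. by have := congr1 (fun M : 'M[algC]_(2 ^ n) => M i j) (Tm_id n); rewrite !mxE. Qed.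

Lemma qb_anc n k q c : (k <= n)%N -> (k <= q)%N -> (q < n)%N -> qb n q (c * 2 ^ (n - k)) = false.
Proof.
move=> hk kq qn.
have m0 : (0 < 2 ^ (n - k))%N by rewrite expn_gt0.
have := qb_split k (n - k) q c 0 m0; rewrite addn0 (subnKC hk) => -> //.
by rewrite ltnNge kq /qb div0n.
Qed.

Lemma inord3 : val (inord 3 : 'I_4) = 3%N.
Proof. exact: inordK. Qed.
Lemma inord3' : nat_of_ord (inord 3 : 'I_4) = 3%N.
Proof. exact: inordK. Qed.

Definition data_id n k (d : pauli_string n) : bool :=
  [forall q : 'I_n, (q < k)%N ==> (d q == ord0)].

Lemma fnZ n x q : (fn n (Zstring n x) q : nat) = if (q < n)%N && (q == x) then 3%N else 0%N.
Proof.
case: (ltnP q n) => qn /=.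
  rewrite (fn_lt _ _ _ qn) ffunE /=; case: eqP => _; [exact: inord3 | by []].
by rewrite /fn insubF // ltnNge qn.
Qed.

Lemma sg4_03 (a b : nat) : a \in [:: 0%N; 3%N] -> b \in [:: 0%N; 3%N] -> sg4 a b = 1.
Proof. by rewrite !inE => /orP[]/eqP-> /orP[]/eqP->. Qed.

Lemma sgsZ n x y : sgs n (Zstring n x) (Zstring n y) = 1.
Proof.
rewrite /sgs big1 // => q _; apply: sg4_03; rewrite fnZ; case: ifP => _; by rewrite !inE.
Qed.

Lemma data_idZ n k x : (k <= x)%N -> data_id n k (Zstring n x).
Proof.
move=> kx; apply/forallP => q; apply/implyP => qk; rewrite ffunE.
case: (eqVneq (val q) x) => [qx|//]; move: qk; rewrite qx ltnNge kx.
by [].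
Qed.

Lemma Nm1_neq1 : (-1 : algC) != 1.
Proof.
apply/negP => /eqP H.
have : (2%:R : algC) = 0 by rewrite -[2%N]/(1 + 1)%N natrD -{1}H addNr.
by move/eqP; rewrite pnatr_eq0.
Qed.

Lemma sign_sq (b : bool) : (-1) ^+ b * (-1) ^+ b = 1 :> algC.
Proof. by case: b; rewrite ?expr0 ?expr1 ?mulr1 ?mulrNN ?mulr1. Qed.

Section Main.
Variables (n k : nat) (U : 'M[algC]_(2 ^ n)) (Es : syndrome_t n k -> pauli_string n).
Hypotheses (hk : (k <= n)%N) (hU : clifford n U) (hEs : syndrome_reps n k U Es).
Local Notation P := (pauli_op n).
Local Notation Ua := (adj (2 ^ n) (2 ^ n) U).
Local Notation g := (gen_g n k U).

Let hUu : unitary _ U := hU.1.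
Let UUa' : U *m Ua = 1%:M := @UUa n U hUu.
Let UaU' : Ua *m U = 1%:M := @UaU n U hUu.

Lemma gE j : g j = U *m P (Zstring n (k + j)) *m Ua.
Proof. by []. Qed.

Lemma gg j : g j *m g j = 1%:M.
Proof.
rewrite gE !mulmxA -[U *m P _ *m Ua *m U]mulmxA UaU' mulmx1.
by rewrite -[U *m P _ *m P _]mulmxA PPself mulmx1 UUa'.
Qed.

Lemma gX_neq0 j (X : 'M[algC]_(2 ^ n)) : X != 0 -> g j *m X != 0.
Proof.
apply: contra => /eqP H; apply/eqP.
by rewrite -[X]mul1mx -(gg j) -mulmxA H mulmx0.
Qed.

Lemma oppm_eq (A : 'M[algC]_(2 ^ n)) : (- A == A) = (A == 0).
Proof.
apply/eqP/eqP => [H|->]; last by rewrite oppr0.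
have : (2%:R : algC) *: A = 0.
  by rewrite scaler_nat mulr2n -{1}H addNr.
move/eqP; rewrite scalemx_eq0 pnatr_eq0 /= => /eqP //.
Qed.

Lemma synd_rel b j : P b *m g j = (-1) ^+ (syndrome n k U (P b) j) *: (g j *m P b).
Proof.
have [e [c Ec]] := hU.2 (Zstring n (k + j)).
have Hc : P b *m g j = sgs n b e *: (g j *m P b).
  by rewrite gE Ec -scalemxAr -scalemxAl (Pcomm n b e) !scalerA mulrC.
rewrite /syndrome ffunE Hc; case: (sgs_pm n b e) => ->.
  by rewrite scale1r eqxx /= expr0 scale1r.
by rewrite scaleN1r oppm_eq (negbTE (@gX_neq0 j _ (P_neq0 n b))) /= expr1 scaleN1r.
Qed.

Lemma proj_comm a : syndrome_proj n k U (syndrome n k U (P a)) *m P a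
   = P a *m syndrome_proj n k U [ffun _ => false].
Proof.
rewrite /syndrome_proj.
apply: (big_rec2 (fun x y => x *m P a = P a *m y)); first by rewrite mul1mx mulmx1.
move=> j x y _ IH.
rewrite -mulmxA IH mulmxA [RHS]mulmxA; congr (_ *m _).
rewrite -scalemxAl -scalemxAr; congr (_ *: _).
rewrite mulmxDl mulmxDr mul1mx mulmx1; congr (_ + _).
rewrite -scalemxAl -scalemxAr. have -> : ([ffun=> false] : syndrome_t n k) j = false by rewrite ffunE.
by rewrite expr0 scale1r synd_rel.
Qed.

Lemma Zk j : P (Zstring n (k + j)) *m ket0 n k = ket0 n k.
Proof.
apply/matrixP => i c.
have vlt : (c * 2 ^ (n - k) < 2 ^ n)%N.
  by rewrite -{2}(subnKC hk) expnD ltn_pmul2r ?expn_gt0.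
rewrite [LHS]mxE (eq_bigr (fun i0 : 'I_(2 ^ n) => P (Zstring n (k + j)) i i0 * ((i0 : nat) == (c * 2 ^ (n - k))%N)%:R)); last first.
  by move=> i0 _; rewrite [ket0 _ _ _ _]mxE.
rewrite (@pick_sumr _ (fun i0 => P (Zstring n (k + j)) i i0) _ vlt) [RHS]mxE.
rewrite PE /Tm mxE -(@prod_eqb n i (Ordinal vlt)).
apply: eq_big_nat => q /andP[_ qn].
rewrite fn_lt ffunE /=.
case: eqP => [qE|_].
  rewrite /sigma inord3 /= qb_anc //; last by rewrite qE leq_addr.
  by case: (qb n q i).
by [].
Qed.

Lemma proj0_ket : syndrome_proj n k U [ffun _ => false] *m (U *m ket0 n k) = U *m ket0 n k.
Proof.
rewrite /syndrome_proj.
apply: (big_rec (fun x => x *m (U *m ket0 n k) = U *m ket0 n k)); first by rewrite mul1mx.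
move=> j x _ IH.
rewrite -mulmxA IH ffunE /= expr0 scale1r -scalemxAl mulmxDl mul1mx.
have -> : g j *m (U *m ket0 n k) = U *m ket0 n k.
  by rewrite gE -!mulmxA [Ua *m (U *m _)]mulmxA UaU' mul1mx Zk.
by rewrite -[X in X + X]scale1r -scalerDl scalerA mulVf ?scale1r // pnatr_eq0.
Qed.


Lemma tr_bPk d l : (l < 2 ^ (n - k))%N ->
  \tr (braL n k l *m P d *m ket0 n k) =
  (\prod_(0 <= q < k) (sigma (fn n d q) false false + sigma (fn n d q) true true)) *
  \prod_(0 <= r < n - k) sigma (fn n d (k + r)) (qb (n - k) r l) false.
Proof.
move=> lm.
rewrite /mxtrace -(sum_prod_bits k (fun q x => sigma (fn n d q) x x)) (@big_mkord _ _ _ (2 ^ k)) mulr_suml.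
apply: eq_bigr => c _.
have vlt : (c * 2 ^ (n - k) < 2 ^ n)%N.
  by rewrite -{2}(subnKC hk) expnD ltn_pmul2r ?expn_gt0.
have wlt : (c * 2 ^ (n - k) + l < 2 ^ n)%N.
  rewrite -{2}(subnKC hk) expnD.
  have cl := ltn_ord c; move: lm cl; set M := (2 ^ (n - k))%N; set K := (2 ^ k)%N.
  move=> lm cl; nia.
rewrite [LHS]mxE (eq_bigr (fun j : 'I_(2 ^ n) => (braL n k l *m P d) c j * ((j : nat) == (c * 2 ^ (n - k))%N)%:R)); last first.
  by move=> j _; rewrite [ket0 _ _ _ _]mxE.
rewrite (@pick_sumr _ (fun j => (braL n k l *m P d) c j) _ vlt) mxE.
rewrite (eq_bigr (fun i : 'I_(2 ^ n) => ((i : nat) == (c * 2 ^ (n - k) + l)%N)%:R * P d i (Ordinal vlt))); last first.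
  by move=> i _; rewrite [braL _ _ _ _ _]mxE.
rewrite (@pick_suml _ (fun i => P d i (Ordinal vlt)) _ wlt).
rewrite PE /Tm mxE /=.
have SP := split_prod k (n - k) (fn n d) c l lm.
rewrite (subnKC hk) in SP; exact: SP.
Qed.

Lemma W_eq p l a : Wop n k U Es p l a (syndrome n k U (P a)) =
  sqrtC (depol_prob n p a) *: (braL n k l *m (Ua *m (P (Es (syndrome n k U (P a))) *m P a) *m U) *m ket0 n k).
Proof.
rewrite /Wop -scalemxAr -!scalemxAl; congr (_ *: _).
have H1 : syndrome_proj n k U (syndrome n k U (P a)) *m (P a *m (U *m ket0 n k)) = P a *m (U *m ket0 n k).
  by rewrite mulmxA proj_comm -mulmxA proj0_ket.
by rewrite -!mulmxA H1.
Qed.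

Lemma adj_adj m r (A : 'M[algC]_(m, r)) : adj _ _ (adj _ _ A) = A.
Proof. by apply/matrixP => i j; rewrite !mxE conjCK. Qed.

Lemma X_unit (E a : pauli_string n) :
  let X := Ua *m (P E *m P a) *m U in X *m adj _ _ X = 1%:M.
Proof.
move=> X; rewrite /X !adj_mul adj_adj !Padj.
rewrite !mulmxA -[Ua *m P E *m P a *m U *m Ua]mulmxA UUa' mulmx1.
rewrite -[Ua *m P E *m P a *m P a]mulmxA PPself mulmx1.
by rewrite -[Ua *m P E *m P E]mulmxA PPself mulmx1 UaU'.
Qed.


Lemma conjU_mul X Y : (U *m X *m Ua) *m (U *m Y *m Ua) = U *m (X *m Y) *m Ua.
Proof. by rewrite !mulmxA -[U *m X *m Ua *m U]mulmxA UaU' mulmx1. Qed.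

Lemma stab_comm g0 : in_stab n k U g0 -> forall j, g0 *m g j = g j *m g0.
Proof.
elim => [|i|A B _ IHA _ IHB] j.
- by rewrite mul1mx mulmx1.
- by rewrite !gE !conjU_mul Pcomm sgsZ scale1r.
- by rewrite -mulmxA IHB mulmxA IHA -mulmxA.
Qed.

Lemma stab_conj g0 : in_stab n k U g0 ->
  exists mu e, Ua *m g0 *m U = mu *: P e /\ data_id n k e.
Proof.
elim => [|j|A B _ [m1 [e1 [E1 D1]]] _ [m2 [e2 [E2 D2]]]].
- exists 1, (identity_string n); rewrite mulmx1 UaU' Pid scale1r; split=> //.
  by apply/forallP => q; apply/implyP => _; rewrite ffunE.
- exists 1, (Zstring n (k + j)); rewrite gE (@conj_back n U hUu) scale1r; split=> //.
  by apply: data_idZ; rewrite leq_addr.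
- exists (m1 * m2 * phs n e1 e2), (mulp n e1 e2); split.
    by rewrite (@conj_mul n U hUu) E1 E2 -scalemxAl -scalemxAr PP !scalerA.
  apply/forallP => q; apply/implyP => qk; rewrite ffunE.
  move/forallP: D1 => /(_ q); rewrite qk => /eqP ->.
  move/forallP: D2 => /(_ q); rewrite qk => /eqP ->.
  by rewrite mul4_self.
Qed.

Lemma sign_inj (b1 b2 : bool) (Y : 'M[algC]_(2 ^ n)) : Y != 0 ->
  (-1) ^+ b1 *: Y = (-1) ^+ b2 *: Y -> b1 = b2.
Proof.
move=> Y0; case: b1; case: b2 => //=; rewrite expr1 expr0 scaleN1r scale1r => /eqP.
  by rewrite oppm_eq (negbTE Y0).
by rewrite eq_sym oppm_eq (negbTE Y0).
Qed.

Lemma TxS_data a d lam : lam != 0 ->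
  Ua *m (P (Es (syndrome n k U (P a))) *m P a) *m U = lam *: P d ->
  in_TxS n k U Es (P a) -> data_id n k d.
Proof.
move=> l0 XE [s' [g0 [c [Hg Ha]]]].
have c0 : c != 0.
  apply/negP => /eqP c0; move: (P_neq0 n a); rewrite Ha c0 scale0r.
  by rewrite eqxx.
have ss : syndrome n k U (P a) = s'.
  apply/ffunP => j; rewrite -(hEs.1 s').
  apply: (@sign_inj _ _ (g j *m P a)); first exact: (@gX_neq0 j _ (P_neq0 n a)).
  rewrite -synd_rel Ha -scalemxAl -scalemxAr scalerA mulrC -scalerA; congr (_ *: _).
  by rewrite -mulmxA (@stab_comm g0 Hg j) mulmxA synd_rel -scalemxAl -mulmxA.
rewrite ss in XE.
have [mu [e [Ee De]]] := @stab_conj g0 Hg.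
have : lam *: P d = (c * mu) *: P e.
  rewrite -XE Ha -!scalemxAr -scalemxAl (mulmxA (P (Es s')) (P (Es s')) g0) PPself mul1mx Ee.
  by rewrite scalerA.
by move/P_inj => -> .
Qed.

Lemma stab_from d : data_id n k d ->
  (forall j : 'I_(n - k), (fn n d (k + j) : nat) \in [:: 0%N; 3%N]) ->
  in_stab n k U (U *m P d *m Ua).
Proof.
move=> Dd Anc.
pose D t : pauli_string n := [ffun q : 'I_n => if (k + t <= q)%N then ord0 else d q].
suff H : forall t, (t <= n - k)%N -> in_stab n k U (U *m P (D t) *m Ua).
  have -> : d = D (n - k)%N.
    by apply/ffunP => q; rewrite ffunE subnKC // leqNgt ltn_ord.
  exact: H.
have Dne : forall t (q : 'I_n), val q != (k + t)%N -> D t.+1 q = D t q.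
  move=> t q qne; rewrite !ffunE addnS ltn_neqAle eq_sym qne.
  by [].
elim => [|t IH] tle.
  have -> : D 0%N = identity_string n.
    apply/ffunP => q; rewrite !ffunE addn0; case: leqP => // qk.
    by move/forallP: Dd => /(_ q); rewrite qk => /eqP.
  rewrite Pid mulmx1 UUa'; exact: stab_one.
have tlt : (t < n - k)%N := tle.
have IH' := IH (ltnW tlt).
have ktn : (k + t < n)%N.
  move: tlt hk; clear; lia.
have := Anc (Ordinal tlt); rewrite /= !inE => /orP[] /eqP Hv.
  have -> : D t.+1 = D t.
    apply/ffunP => q; case: (eqVneq (val q) (k + t)%N) => [qE|qne]; last exact: Dne.
    rewrite !ffunE qE addnS ltnn leqnn; apply: val_inj => /=.
    by rewrite -qE fnE in Hv; rewrite Hv.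
  exact: IH'.
have -> : P (D t.+1) = P (D t) *m P (Zstring n (k + t)).
  rewrite PP; have -> : phs n (D t) (Zstring n (k + t)) = 1.
    rewrite /phs big1 // => q _.
    have : (fn n (D t) q : nat) = 0%N \/ (fn n (Zstring n (k + t)) q : nat) = 0%N.
      rewrite fnZ; case: ifP => [/andP[qn /eqP qE]|_]; last by right.
      left; rewrite qE (fn_lt _ _ _ ktn) ffunE /= leqnn.
      by [].
    by case=> ->; [exact: ph_0l | exact: ph_0r].
  rewrite scale1r; congr pauli_op.
  apply/ffunP => q; rewrite [in RHS]ffunE.
  case: (eqVneq (val q) (k + t)%N) => [qE|qne].
    rewrite !ffunE qE addnS ltnn leqnn qE eqxx mul4_0l.
    by apply: val_inj; rewrite /= ?inord3 ?inord3'; rewrite -qE fnE in Hv; rewrite Hv.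
  rewrite Dne //; set x := D t q; rewrite /Zstring ffunE (negbTE qne).
  by rewrite mul4_0r.
rewrite -conjU_mul; apply: stab_mul => //.
exact: (stab_gen n k U (Ordinal tlt)).
Qed.

Lemma data_TxS a d lam : lam != 0 ->
  Ua *m (P (Es (syndrome n k U (P a))) *m P a) *m U = lam *: P d ->
  data_id n k d -> in_TxS n k U Es (P a).
Proof.
move=> l0 XE Dd.
have Xc : forall j, (P (Es (syndrome n k U (P a))) *m P a) *m g j = g j *m (P (Es (syndrome n k U (P a))) *m P a).
  move=> j; rewrite -mulmxA (synd_rel a j) -scalemxAr (mulmxA _ (g j) (P a)).
  rewrite (synd_rel (Es (syndrome n k U (P a))) j) (hEs.1 (syndrome n k U (P a))).
  by rewrite -scalemxAl -mulmxA scalerA sign_sq scale1r.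
have Anc : forall j : 'I_(n - k), (fn n d (k + j) : nat) \in [:: 0%N; 3%N].
  move=> j.
  have kjn : (k + j < n)%N.
    have := ltn_ord j; move: hk; clear; lia.
  set Z := P (Zstring n (k + j)).
  have H1 : P d *m Z = Z *m P d.
    have := congr1 (fun M => Ua *m M *m U) (Xc j).
    rewrite /= (@conj_mul n U hUu _ (g j)) (@conj_mul n U hUu (g j)) XE gE (@conj_back n U hUu) -/Z.
    rewrite -scalemxAl -scalemxAr; exact: scalerI.
  have Y0 : Z *m P d != 0.
    apply/negP => /eqP Y; move: (one_neq0 n).
    rewrite -(PPself n (Zstring n (k + j))) -/Z -{2}[Z]mul1mx -(PPself n d).
    by rewrite !mulmxA Y !mul0mx eqxx.
  have Hs : sgs n d (Zstring n (k + j)) = 1.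
    move: H1; rewrite Pcomm; case: (sgs_pm n d (Zstring n (k + j))) => -> //.
    by rewrite scaleN1r => /eqP; rewrite oppm_eq (negbTE Y0).
  move: Hs; rewrite /sgs (bigD1_seq (k + j)%N) ?mem_index_iota ?iota_uniq //=.
  rewrite big1_seq ?mulr1; last first.
    move=> q /andP[qne _]; rewrite /sg4 fnZ (negbTE qne) andbF /=.
    by rewrite andbF.
  rewrite fnZ kjn eqxx /=.
  case: (fn n d (k + j)) => [[|[|[|[|?]]]] ?] //; rewrite /sg4 /= => /eqP;
    by rewrite (negbTE Nm1_neq1).
exists (syndrome n k U (P a)), (U *m P d *m Ua), lam; split; first exact: stab_from.
have X0 : P (Es (syndrome n k U (P a))) *m P a = lam *: (U *m P d *m Ua).
  by rewrite -(@conj_fwd n U hUu (P (Es (syndrome n k U (P a))) *m P a)) XE -scalemxAr -scalemxAl.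
by rewrite -[LHS]mul1mx -(PPself n (Es (syndrome n k U (P a)))) -mulmxA X0 -scalemxAr.
Qed.

End Main.

Lemma sumB n k (d : pauli_string n) :
  \sum_(l < 2 ^ (n - k)) `|\prod_(0 <= r < n - k) sigma (fn n d (k + r)) (qb (n - k) r l) false| ^+ 2 = 1.
Proof.
have H := sum_prod_bits (n - k) (fun r x => `|sigma (fn n d (k + r)) x false| ^+ 2).
rewrite (@big_mkord _ _ _ (2 ^ (n - k))) in H.
have H2 : \prod_(0 <= q < n - k) (`|sigma (fn n d (k + q)) false false| ^+ 2 +
         `|sigma (fn n d (k + q)) true false| ^+ 2) = 1.
  by rewrite big1 // => q _; rewrite sig_col.
rewrite H2 in H; rewrite -[RHS]H; apply: eq_bigr => l _.
by rewrite normr_prod -prodrXl.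
Qed.

Lemma sqA n k (d : pauli_string n) : (k <= n)%N ->
  `|\prod_(0 <= q < k) (sigma (fn n d q) false false + sigma (fn n d q) true true)| ^+ 2
  = if data_id n k d then (2 ^ (2 * k))%:R else 0.
Proof.
move=> hk; rewrite normr_prod -prodrXl.
case: ifP => [Dd|Dd].
  rewrite (eq_big_nat _ _ (F2 := fun _ => 4%:R)); last first.
    move=> q /andP[_ qk]; have qn : (q < n)%N by apply: leq_trans qk hk.
    rewrite sig_tr (fn_lt _ _ _ qn).
    move/forallP: Dd => /(_ (Ordinal qn)); rewrite /= qk => /eqP ->.
    by rewrite /= normr_nat -natrX.
  by rewrite prodr_const_nat subn0 -natrX expnM.
apply/eqP; rewrite big_mkcond prodf_seq_eq0; apply/hasP.
move/negbT: Dd; rewrite negb_forall => /existsP[q]; rewrite negb_imply => /andP[qk dq].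
exists (val q); first by rewrite mem_index_iota.
rewrite /= sig_tr fnE.
have -> : (nat_of_ord (d q) == 0%N) = false by move: dq; case: (d q) => [[|m] pm].
by rewrite normr0 expr0n.
Qed.

Theorem lemma3 (n k : nat) (U : 'M[algC]_(2 ^ n))
  (Es : syndrome_t n k -> pauli_string n) (p : algC) (a : pauli_string n) :
  (k <= n)%N -> clifford n U -> syndrome_reps n k U Es -> 0 <= p <= 1 ->
  let lhs := (2 ^ (2 * k))%:R^-1 *
    \sum_(l < 2 ^ (n - k))
      `|\tr (Wop n k U Es p l a (syndrome n k U (pauli_op n a)))| ^+ 2 in
  (in_TxS n k U Es (pauli_op n a) -> lhs = depol_prob n p a) /\
  (~ in_TxS n k U Es (pauli_op n a) -> lhs = 0).
Proof.
move=> hk hU hEs /andP[p0 p1] lhs.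
set E := Es (syndrome n k U (pauli_op n a)).
have [d [c Ed]] := @cliff_inv n U hU (mulp n E a).
set lam := phs n E a * c.
have XE : adj _ _ U *m (pauli_op n E *m pauli_op n a) *m U = lam *: pauli_op n d.
  by rewrite PP -scalemxAr -scalemxAl Ed scalerA.
have lamu : lam * lam^* = 1 := @unit_phase n (adj _ _ U *m (pauli_op n E *m pauli_op n a) *m U) lam d (@X_unit n U hU E a) XE.
have hl : `|lam| ^+ 2 = 1 by rewrite normCK lamu.
clearbody lam.
have l0 : lam != 0 by apply/negP => /eqP l0; move: lamu; rewrite l0 mul0r => /eqP; rewrite eq_sym oner_eq0.
have pr0 : 0 <= depol_prob n p a.
  rewrite /depol_prob; apply: mulr_ge0; apply: exprn_ge0.
    by rewrite subr_ge0; apply: (le_trans _ p1); rewrite ler_piMl // ler_pdivrMr ?ltr0n // mul1r ler_nat.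
  by rewrite divr_ge0 // ler0n.
have Lhs : lhs = depol_prob n p a * (if data_id n k d then 1 else 0).
  rewrite /lhs.
  rewrite (eq_bigr (fun l : 'I_(2 ^ (n - k)) => depol_prob n p a *
     `|\prod_(0 <= q < k) (sigma (fn n d q) false false + sigma (fn n d q) true true)| ^+ 2 *
     `|\prod_(0 <= r < n - k) sigma (fn n d (k + r)) (qb (n - k) r l) false| ^+ 2)); last first.
    move=> l _; rewrite (@W_eq n k U Es hk hU p l a) -/E XE -scalemxAr -scalemxAl !mxtraceZ.
    rewrite (@tr_bPk n k hk d l (ltn_ord l)) !normrM !exprMn hl mul1r.
    by rewrite ger0_norm ?sqrtC_ge0 // sqrtCK mulrA.
  rewrite -mulr_sumr sumB mulr1 sqA //.
  case: ifP => _; last by rewrite !mulr0.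
  by rewrite mulr1 mulrCA mulVf ?mulr1 // pnatr_eq0 expn_eq0.
split.
  move=> HT; rewrite Lhs (@TxS_data n k U Es hU hEs a d lam l0 XE HT) mulr1.
  by [].
move=> HT; rewrite Lhs; case: ifP => Dd; last by rewrite mulr0.
by case: HT; exact: (@data_TxS n k U Es hk hU hEs a d lam l0 XE Dd).
Qed.
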